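(* Let $n\ge 2$ be an integer such that $n+1$ is an odd prime. If $[\delta_0,\dots,\delta_n]\in\{-1,1\}^{n+1}$ satisfies $\sum_{j=0}^n\delta_j\binom{n}{j}=0$, then either $\delta_j=(-1)^j$ for all $j$ or $\delta_j=-(-1)^j$ for all $j$. Equivalently, $\hat J_n=0$.
   Context: For even $n$, $\hat J_n$ is the number of vectors $(\epsilon_0,\dots,\epsilon_{n/2-1})\in\{-1,0,1\}^{n/2}$ with $\sum_{i=0}^{n/2-1}\epsilon_i\binom{n}{i}=(-1)^{n/2+1}\frac12\binom{n}{n/2}$, excluding the alternating vector $\epsilon_i=(-1)^i$. *)

(* Defs.v *)
From mathcomp Require Import all_boot all_order all_algebra.
Set Implicit Arguments. Unset Strict Implicit. Unset Printing Implicit Defensive.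

(* Main.v *)
Require Import Defs.
From mathcomp Require Import all_boot all_order all_algebra.
From mathcomp Require Import zify ring lra.
Import GRing.Theory Num.Theory.
Local Open Scope ring_scope.

Lemma binmod (n : nat) (hp : prime n.+1) (j : nat) : (j <= n)%N ->
  (n.+1%:Z %| ('C(n, j))%:Z - (-1) ^+ j)%Z.
Proof.
elim: j => [|j IH] hj; first by rewrite bin0 expr0 subrr dvdz0.
have -> : ('C(n, j.+1))%:Z - (-1) ^+ j.+1
   = ('C(n.+1, j.+1))%:Z - (('C(n, j))%:Z - (-1) ^+ j).
  by rewrite binS PoszD exprS; ring.
apply: rpredB; last by apply: IH; exact: ltnW.
by rewrite dvdzE /=; apply: prime_dvd_bin.
Qed.

Lemma arith {B p m q : int} : p = 2 * m + 1 -> 1 <= m -> 0 <= B -> B <= p ->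
  2 * B - p = q * p -> B = 0 \/ B = p.
Proof. move=> hpm hm hB0 hBp hq.
have : q = -1 \/ q = 0 \/ q = 1 by nia.
case=> [hq1|[hq1|hq1]]; subst q; lia.
Qed.
Theorem mainTheorem4 (n : nat) (hn : (2 <= n)%N) (hp : prime n.+1) (hodd : odd n.+1)
  (delta : 'I_n.+1 -> int)
  (hd : forall j, delta j = 1 \/ delta j = -1)
  (hsum : \sum_(j < n.+1) delta j * ('C(n, j))%:Z = 0) :
  (forall j : 'I_n.+1, delta j = (-1) ^+ j) \/
  (forall j : 'I_n.+1, delta j = - (-1) ^+ j).
Proof.
set A := [set j : 'I_n.+1 | delta j == (-1) ^+ j].
have hdiv : (n.+1%:Z %| \sum_(j < n.+1) delta j * (-1) ^+ j)%Z.
  have -> : \sum_(j < n.+1) delta j * (-1) ^+ j =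
     \sum_(j < n.+1) delta j * ('C(n, j))%:Z
     - \sum_(j < n.+1) delta j * (('C(n, j))%:Z - (-1) ^+ j).
    rewrite -sumrB; apply: eq_bigr => j _; ring.
  rewrite hsum sub0r rpredN; apply: rpred_sum => j _.
  apply: dvdz_mull; apply: binmod => //; rewrite -ltnS; exact: ltn_ord.
have hS : \sum_(j < n.+1) delta j * (-1) ^+ j = 2 * (#|A|)%:Z - n.+1%:Z.
  rewrite (bigID (fun j => j \in A)) /=.
  rewrite (eq_bigr (fun _ => 1)); last first.
    by move=> j; rewrite inE => /eqP ->; rewrite -expr2 sqrr_sign.
  rewrite [X in _ + X](eq_bigr (fun _ => -1)); last first.
    move=> j; rewrite inE => hj; rewrite -signr_odd in hj *.
    case: (hd j) hj; case: (odd j) => -> //=; rewrite ?expr0 ?expr1 ?mulr1 ?mulN1r ?opprK //.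
  rewrite !sumr_const.
  have hc := cardsC A; rewrite card_ord in hc.
  have e : #|[pred i | i \notin A]| = #|~: A| by apply: eq_card => i; rewrite !inE.
  have -> : n.+1%:Z = (#|A| + #|~: A|)%N%:Z by rewrite hc.
  rewrite e PoszD mulNrn !natz; ring.
rewrite hS in hdiv; case/dvdzP: hdiv => q hq.
have hm : n.+1%:Z = 2 * (n./2)%:Z + 1.
  have h2 : n = (n./2).*2 by rewrite -[n in LHS]odd_double_half; move: hodd => /= /negbTE ->.
  rewrite -mul2n in h2; lia.
have hc := cardsC A; rewrite card_ord in hc.
have hB : (0 <= (#|A|)%:Z) /\ ((#|A|)%:Z <= n.+1%:Z) by split; lia.
have hm1 : 1 <= (n./2)%:Z by rewrite lez_nat; move: hn; rewrite -[n in (2 <= n)%N]odd_double_half; move: hodd => /= /negbTE ->; lia.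
case: (arith hm hm1 hB.1 hB.2 hq) => hA.
- right => j.
  have hA0 : #|A| = 0%N by case: hA.
  have : j \notin A by rewrite (cards0_eq hA0) inE.
  rewrite inE -signr_odd; case: (hd j); case: (odd j) => -> //=.
- left => j.
  have hC : #|~: A| = 0%N.
    case: hA => hA; move: hc; rewrite hA; lia.
  have : j \notin ~: A by rewrite (cards0_eq hC) inE.
  by rewrite inE negbK inE => /eqP.
Qed.
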